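(* If an $R$-module $M$ is prime and uniform, then $M$ is strongly prime.
   Context: $R$ is a commutative Noetherian local ring. A module $M\neq0$ is prime if every $r\in R$ acts on $M$ either as zero or injectively. A module is uniform if it is nonzero and any two nonzero submodules intersect nontrivially. A module $M\ne0$ is strongly prime if every nonzero $R$-endomorphism $f:M\to M$ is injective. *)

(* Defs.v *)
From HB Require Import structures.
From mathcomp Require Import all_boot all_order all_algebra.
Set Implicit Arguments. Unset Strict Implicit. Unset Printing Implicit Defensive.
Import GRing.Theory.
Local Open Scope ring_scope.

Definition is_ideal (R : comNzRingType) (I : R -> Prop) : Prop :=
  [/\ I 0, (forall x y, I x -> I y -> I (x + y)) & (forall r x, I x -> I (r * x))].

Definition noetherian_ring (R : comNzRingType) : Prop :=
  forall I : nat -> R -> Prop,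
    (forall n, is_ideal (I n)) ->
    (forall n x, I n x -> I n.+1 x) ->
    exists N, forall m, (N <= m)%N -> forall x, I m x <-> I N x.

Definition maximal_ideal (R : comNzRingType) (I : R -> Prop) : Prop :=
  [/\ is_ideal I, ~ I 1 &
      forall J : R -> Prop, is_ideal J -> (forall x, I x -> J x) ->
        (forall x, J x <-> I x) \/ J 1].

Definition local_ring (R : comNzRingType) : Prop :=
  exists I : R -> Prop, maximal_ideal I /\
    forall J : R -> Prop, maximal_ideal J -> forall x, J x <-> I x.

Definition is_submodule (R : comNzRingType) (M : lmodType R) (N : M -> Prop) : Prop :=
  [/\ N 0, (forall x y, N x -> N y -> N (x + y)) & (forall (r : R) x, N x -> N (r *: x))].

Definition nonzero_module (R : comNzRingType) (M : lmodType R) : Prop :=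
  exists m : M, m <> 0.

Definition prime_module (R : comNzRingType) (M : lmodType R) : Prop :=
  nonzero_module M /\
  forall r : R, (forall m : M, r *: m = 0) \/ injective (fun m : M => r *: m).

Definition uniform_module (R : comNzRingType) (M : lmodType R) : Prop :=
  nonzero_module M /\
  forall N1 N2 : M -> Prop, is_submodule N1 -> is_submodule N2 ->
    (exists x, N1 x /\ x <> 0) -> (exists x, N2 x /\ x <> 0) ->
    exists x, [/\ N1 x, N2 x & x <> 0].

Definition strongly_prime_module (R : comNzRingType) (M : lmodType R) : Prop :=
  nonzero_module M /\
  forall f : {linear M -> M}, (exists m, f m <> 0) -> injective f.

(* Main.v *)
Require Import Defs.
From mathcomp Require Import all_boot all_order all_algebra.
Import GRing.Theory.
Local Open Scope ring_scope.

Lemma cyc_sub (R : comNzRingType) (M : lmodType R) (z : M) :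
  is_submodule (fun x : M => exists r : R, x = r *: z).
Proof.
split.
- by exists 0; rewrite scale0r.
- by move=> x y [a ->] [b ->]; exists (a + b); rewrite scalerDl.
- by move=> r x [a ->]; exists (r * a); rewrite scalerA.
Qed.

Theorem lemma2p1 (R : comNzRingType) (M : lmodType R) :
  noetherian_ring R -> local_ring R ->
  prime_module M -> uniform_module M -> strongly_prime_module M.
Proof.
move=> _ _ [nzM Hp] [_ Hu]; split => // f [m fm0] x y fxy.
apply/eqP; rewrite -subr_eq0; apply/eqP.
set z := x - y.
have fz : f z = 0 by rewrite /z linearB fxy subrr.
case: (eqVneq z 0) => [//|/eqP z0]; exfalso; apply: (fm0).
have m0 : m <> 0 by move=> m0; apply: fm0; rewrite m0 linear0.
have [w [[a wa] [b wb] w0]] := Hu _ _ (@cyc_sub _ _ z) (@cyc_sub _ _ m)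
  (ex_intro _ z (conj (ex_intro _ 1 (esym (scale1r z))) z0))
  (ex_intro _ m (conj (ex_intro _ 1 (esym (scale1r m))) m0)).
have bf : b *: f m = 0 by rewrite -linearZ /= -wb wa linearZ /= fz scaler0.
case: (Hp b) => [Hb|Hinj].
- by exfalso; apply: w0; rewrite wb Hb.
- by apply: Hinj; rewrite /= bf scaler0.
Qed.
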